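(* For a monoid $H$, the following are equivalent: (a) $H$ is aperiodic; (b) $\mathcal{P}_{\mathrm{fin},1}(H)$ is BF-atomic; (c) $\mathcal{P}_{\mathrm{fin},1}(H)$ is BF; (d) $\mathcal{P}_{\mathrm{fin},1}(H)$ is FF; (e) $\mathcal{P}_{\mathrm{fin},1}(H)$ is FF-atomic.
   Context: A monoid $H$ is aperiodic if every element $x\neq 1_H$ generates an infinite submonoid. $\mathcal{P}_{\mathrm{fin},1}(H)$ denotes the set of all non-empty finite subsets of $H$ containing $1_H$, a monoid under $XY=\{xy:x\in X,y\in Y\}$. In a monoid $M$: $x\mid_M y$ iff $y\in MxM$; $x,y$ are associated if each divides the other; $x$ properly divides $y$ if $x\mid_M y$ and $y\nmid_M x$. A unit-divisor is an element dividing $1_M$; other elements are non-unit-divisors. An irreducible is a non-unit-divisor $a$ with $a\neq xy$ for all non-unit-divisors $x,y$ properly dividing $a$; an atom is a non-unit-divisor that is not a product of two non-unit-divisors. A factorization (resp. atomic factorization) of $x$ is a finite word over the irreducibles (resp. atoms) whose product is $x$; its length is the number of letters. Two words are equivalent if each is, up to associatedness of letters, a subword of a permutation of the other. $M$ is BF if every non-unit-divisor has a factorization into irreducibles and, for each element, the set of lengths of its factorizations is bounded; FF if every non-unit-divisor has a factorization and each element has only finitely many pairwise inequivalent factorizations. BF-atomic and FF-atomic are defined identically with atoms and atomic factorizations in place of irreducibles and factorizations. *)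

(* Defs.v *)
From Stdlib Require Import List Permutation.
Import ListNotations.
Set Implicit Arguments.

Record Monoid := {
  mcar :> Type;
  mmul : mcar -> mcar -> mcar;
  mone : mcar;
  mmulA : forall x y z, mmul x (mmul y z) = mmul (mmul x y) z;
  mmul1 : forall x, mmul mone x = x;
  mmulm1 : forall x, mmul x mone = x
}.

Definition finite_set (T : Type) (S : T -> Prop) : Prop :=
  exists l : list T, forall y, S y -> In y l.

Fixpoint mpow (H : Monoid) (x : H) (n : nat) : H :=
  match n with 0 => mone H | S n => mmul H x (@mpow H x n) end.

Definition aperiodic (H : Monoid) : Prop :=
  forall x : H, x <> mone H -> ~ finite_set (fun y => exists n, y = @mpow H x n).

Definition Pfin1 (H : Monoid) : Type :=
  { X : H -> Prop | finite_set X /\ X (mone H) }.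

Definition setmul (H : Monoid) (X Y : H -> Prop) : H -> Prop :=
  fun z => exists x y, X x /\ Y y /\ z = mmul H x y.

Lemma setmul_fin1 (H : Monoid) (X Y : H -> Prop) :
  finite_set X /\ X (mone H) -> finite_set Y /\ Y (mone H) ->
  finite_set (@setmul H X Y) /\ @setmul H X Y (mone H).
Proof.
  intros [[lx Hx] X1] [[ly Hy] Y1]; split.
  - exists (map (fun p => mmul H (fst p) (snd p)) (list_prod lx ly)).
    intros z [x [y [Xx [Yy ->]]]].
    apply in_map_iff; exists (x, y); split; [reflexivity|].
    apply in_prod; auto.
  - exists (mone H), (mone H); repeat split; auto. symmetry; apply mmul1.
Qed.

Definition Pmul (H : Monoid) (X Y : Pfin1 H) : Pfin1 H :=
  exist _ (@setmul H (proj1_sig X) (proj1_sig Y)) (@setmul_fin1 H _ _ (proj2_sig X) (proj2_sig Y)).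

Lemma one_fin1 (H : Monoid) :
  finite_set (fun y : H => y = mone H) /\ (fun y : H => y = mone H) (mone H).
Proof. split; [exists [mone H]; intros y ->; left; reflexivity | reflexivity]. Qed.

Definition Pone (H : Monoid) : Pfin1 H := exist _ (fun y => y = mone H) (one_fin1 H).

Section Fact.
Variables (M : Type) (mul : M -> M -> M) (one : M).

Definition mdivides (x y : M) : Prop := exists a b, y = mul (mul a x) b.
Definition massoc (x y : M) : Prop := mdivides x y /\ mdivides y x.
Definition pdivides (x y : M) : Prop := mdivides x y /\ ~ mdivides y x.
Definition unit_divisor (x : M) : Prop := mdivides x one.

Definition irreducible (a : M) : Prop :=
  ~ unit_divisor a /\
  forall x y, ~ unit_divisor x -> ~ unit_divisor y ->
    pdivides x a -> pdivides y a -> a <> mul x y.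

Definition atom (a : M) : Prop :=
  ~ unit_divisor a /\
  forall x y, ~ unit_divisor x -> ~ unit_divisor y -> a <> mul x y.

Definition wprod (w : list M) : M := fold_right mul one w.

Definition factorization (P : M -> Prop) (x : M) (w : list M) : Prop :=
  Forall P w /\ wprod w = x.

Inductive subword : list M -> list M -> Prop :=
| sw_nil : subword [] []
| sw_skip : forall a u v, subword u v -> subword u (a :: v)
| sw_keep : forall a u v, subword u v -> subword (a :: u) (a :: v).

Definition sub_perm_assoc (u v : list M) : Prop :=
  exists w s, Permutation v w /\ subword s w /\ Forall2 massoc u s.

Definition wequiv (u v : list M) : Prop := sub_perm_assoc u v /\ sub_perm_assoc v u.

Definition BF_wrt (P : M -> Prop) : Prop :=
  (forall x, ~ unit_divisor x -> exists w, factorization P x w) /\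
  (forall x, exists N, forall w, factorization P x w -> length w <= N).

Definition FF_wrt (P : M -> Prop) : Prop :=
  (forall x, ~ unit_divisor x -> exists w, factorization P x w) /\
  (forall x, exists L : list (list M),
      Forall (factorization P x) L /\
      forall w, factorization P x w -> exists w', In w' L /\ wequiv w w').

Definition BF := BF_wrt irreducible.
Definition FF := FF_wrt irreducible.
Definition BF_atomic := BF_wrt atom.
Definition FF_atomic := FF_wrt atom.
End Fact.

(* Main.v *)
Require Import Defs.
From Stdlib Require Import List Permutation Lia Classical ClassicalEpsilon FunctionalExtensionality PropExtensionality.
Import ListNotations.

Lemma subword_len (M : Type) (u v : list M) : subword u v -> length u <= length v.
Proof. induction 1; simpl; lia. Qed.

Lemma spa_len (M : Type) (mul : M -> M -> M) u v : sub_perm_assoc mul u v -> length u <= length v.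
Proof.
  intros [w [s [Pm [Sw F2]]]].
  rewrite (Forall2_length F2), (Permutation_length Pm). apply subword_len; auto.
Qed.

Lemma FF_BF (M : Type) (mul : M -> M -> M) (one : M) P :
  FF_wrt mul one P -> BF_wrt mul one P.
Proof.
  intros [Ex Fin]; split; auto.
  intros x. destruct (Fin x) as [L [_ HL]].
  exists (list_max (map (@length M) L)). intros w Fw.
  destruct (HL w Fw) as [w' [In' [Sp _]]].
  eapply PeanoNat.Nat.le_trans; [eapply spa_len; exact Sp|].
  pose proof (proj1 (list_max_le (map (@length M) L) _) (le_n _)) as F.
  rewrite Forall_forall in F. apply F. apply in_map. auto.
Qed.

Definition dec (P : Prop) : bool := if excluded_middle_informative P then true else false.
Lemma decP P : dec P = true <-> P.
Proof. unfold dec; destruct (excluded_middle_informative P); split; intros; auto; discriminate || contradiction. Qed.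

Lemma decT P : dec P = true -> P.
Proof. apply decP. Qed.
Lemma Tdec (P : Prop) : P -> dec P = true.
Proof. apply decP. Qed.

Fixpoint subs {A : Type} (l : list A) : list (list A) :=
  match l with [] => [[]] | a :: l' => map (cons a) (subs l') ++ subs l' end.

Lemma subs_filter {A : Type} (f : A -> bool) l : In (filter f l) (subs l).
Proof.
  induction l; simpl; auto.
  apply in_or_app. destruct (f a); [left; apply in_map; auto | right; auto].
Qed.

Fixpoint words {T : Type} (C : list T) (n : nat) : list (list T) :=
  match n with 0 => [[]] | S n => [] :: flat_map (fun c => map (cons c) (words C n)) C end.

Lemma words_spec {T : Type} (C : list T) n : forall w, length w <= n ->
  (forall z, In z w -> In z C) -> In w (words C n).
Proof.
  induction n; intros w Hl Hin.
  - destruct w; simpl in *; [auto|lia].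
  - destruct w as [|a w]; simpl; [auto|]. right.
    apply in_flat_map. exists a. split; [apply Hin; simpl; auto|].
    apply in_map. apply IHn; [simpl in Hl; lia| intros; apply Hin; simpl; auto].
Qed.

Section P.
Variable H : Monoid.
Local Notation T := (Pfin1 H).
Local Notation Wp := (wprod (@Pmul H) (Pone H)).
Local Notation one := (mone H).
Local Notation mm := (mmul H).

Definition mem (X : T) : H -> Prop := proj1_sig X.
Definition Sub (X Y : T) := forall y, mem X y -> mem Y y.
Definition nonunit (X : T) := ~ unit_divisor (@Pmul H) (Pone H) X.

Lemma mem1 (X : T) : mem X one.
Proof. exact (proj2 (proj2_sig X)). Qed.

Lemma memP (X Y : T) z : mem (Pmul X Y) z <-> exists x y, mem X x /\ mem Y y /\ z = mm x y.
Proof. reflexivity. Qed.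

Lemma mem_one y : mem (Pone H) y <-> y = one.
Proof. reflexivity. Qed.

Lemma Pext (X Y : T) : (forall y, mem X y <-> mem Y y) -> X = Y.
Proof.
  destruct X as [f pf], Y as [g pg]; unfold mem; simpl; intros E.
  assert (f = g) by (extensionality y; apply propositional_extensionality; auto).
  subst. f_equal. apply proof_irrelevance.
Qed.

Lemma Pmul_assoc (X Y Z : T) : Pmul X (Pmul Y Z) = Pmul (Pmul X Y) Z.
Proof.
  apply Pext; intro z; split.
  - intros [x [w [Hx [[y [z' [Hy [Hz ->]]]] ->]]]].
    exists (mm x y), z'. split; [exists x, y; auto|split; auto]. apply mmulA.
  - intros [w [z' [[x [y [Hx [Hy ->]]]] [Hz ->]]]].
    exists x, (mm y z'). split; auto. split; [exists y, z'; auto|]. symmetry; apply mmulA.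
Qed.

Lemma Pone_l (X : T) : Pmul (Pone H) X = X.
Proof.
  apply Pext; intro z; split.
  - intros [o [x [Ho [Hx ->]]]]. rewrite mem_one in Ho; subst. rewrite mmul1; auto.
  - intros Hz. exists one, z. split; [reflexivity|split; auto]. symmetry; apply mmul1.
Qed.

Lemma Pone_r (X : T) : Pmul X (Pone H) = X.
Proof.
  apply Pext; intro z; split.
  - intros [x [o [Hx [Ho ->]]]]. rewrite mem_one in Ho; subst. rewrite mmulm1; auto.
  - intros Hz. exists z, one. split; auto; split; [reflexivity|]. symmetry; apply mmulm1.
Qed.

Lemma Wp_cons (a : T) w : Wp (a :: w) = Pmul a (Wp w).
Proof. reflexivity. Qed.

Lemma Wp_app (u v : list T) : Wp (u ++ v) = Pmul (Wp u) (Wp v).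
Proof.
  induction u; simpl app.
  - change (Wp v = Pmul (Pone H) (Wp v)). rewrite Pone_l; auto.
  - rewrite !Wp_cons, IHu, Pmul_assoc. auto.
Qed.

Lemma sub_mul_l (X Y : T) : Sub X (Pmul X Y).
Proof. intros y Hy. exists y, one. split; auto. split; [apply mem1|]. symmetry; apply mmulm1. Qed.

Lemma sub_mul_r (X Y : T) : Sub Y (Pmul X Y).
Proof. intros y Hy. exists one, y. split; [apply mem1|]. split; auto. symmetry; apply mmul1. Qed.

Lemma nonunit_elt (X : T) : nonunit X -> exists a, mem X a /\ a <> one.
Proof.
  intros NU. apply NNPP; intro C. apply NU.
  assert (X = Pone H).
  { apply Pext; intro y; split; intro Hy.
    - destruct (classic (y = one)) as [E|E]; [exact E| exfalso; apply C; eauto].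
    - rewrite mem_one in Hy; subst; apply mem1. }
  subst. exists (Pone H), (Pone H). rewrite !Pone_l. reflexivity.
Qed.

Lemma mpow_r (x : H) n : @mpow H x (S n) = mm (@mpow H x n) x.
Proof.
  induction n; simpl.
  - rewrite mmul1, mmulm1; auto.
  - simpl in IHn. rewrite <- mmulA, <- IHn. reflexivity.
Qed.

Lemma mpow_add (x : H) a b : mm (@mpow H x a) (@mpow H x b) = @mpow H x (a + b).
Proof. induction a; simpl; [apply mmul1| rewrite <- mmulA, IHa; auto]. Qed.

Lemma ap_left (Hap : aperiodic H) (Q : T) a : a <> one ->
  (forall q, mem Q q -> mem Q (mm a q)) -> False.
Proof.
  intros Na St. apply (Hap a Na). destruct (proj1 (proj2_sig Q)) as [l Hl].
  exists l. intros y [n ->]. apply Hl. change (mem Q (@mpow H a n)).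
  induction n; simpl; [apply mem1| apply St; auto].
Qed.

Lemma ap_right (Hap : aperiodic H) (Q : T) a : a <> one ->
  (forall q, mem Q q -> mem Q (mm q a)) -> False.
Proof.
  intros Na St. apply (Hap a Na). destruct (proj1 (proj2_sig Q)) as [l Hl].
  exists l. intros y [n ->]. apply Hl. change (mem Q (@mpow H a n)).
  induction n; [apply mem1| rewrite mpow_r; apply St; auto].
Qed.

Definition cnt (l : list H) (X : T) := length (filter (fun y => dec (mem X y)) l).

Lemma cnt_le l A X : Sub A X -> cnt l A <= cnt l X.
Proof.
  intros S; unfold cnt; induction l; simpl; auto.
  destruct (dec (mem A a)) eqn:EA, (dec (mem X a)) eqn:EX; simpl; try lia.
  apply decT in EA. apply S in EA. apply Tdec in EA. congruence.
Qed.

Lemma cnt_lt l A X y : Sub A X -> In y l -> mem X y -> ~ mem A y -> cnt l A < cnt l X.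
Proof.
  intros S Hy HX HA; induction l; simpl in *; [contradiction|].
  destruct Hy as [->|Hy].
  - assert (dec (mem A y) = false) as EA.
    { destruct (dec (mem A y)) eqn:E; auto. apply decT in E; contradiction. }
    assert (dec (mem X y) = true) as EX by (apply Tdec; auto).
    unfold cnt; simpl; rewrite EA, EX; simpl. pose proof (cnt_le l A X S) as HH. unfold cnt in HH. lia.
  - specialize (IHl Hy).
    unfold cnt in *; simpl; destruct (dec (mem A a)) eqn:EA, (dec (mem X a)) eqn:EX; simpl; try lia.
    apply decT in EA. apply S in EA. apply Tdec in EA. congruence.
Qed.

Lemma len_bound (Hap : aperiodic H) l : forall w, Forall nonunit w ->
  (forall y, mem (Wp w) y -> In y l) -> length w <= cnt l (Wp w).
Proof.
  induction w as [|a w IH]; intros F Hl; simpl; [lia|].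
  inversion F; subst. rewrite Wp_cons in *.
  assert (IH' : length w <= cnt l (Wp w)) by (apply IH; auto; intros y Hy; apply Hl, sub_mul_r, Hy).
  destruct (nonunit_elt _ H2) as [a' [Ha' Na']].
  assert (exists y, In y l /\ mem (Pmul a (Wp w)) y /\ ~ mem (Wp w) y) as [y [Y1 [Y2 Y3]]].
  { apply NNPP; intro C. apply (ap_left Hap (Wp w) _ Na'). intros q Hq.
    apply NNPP; intro Nq. apply C. exists (mm a' q).
    assert (mem (Pmul a (Wp w)) (mm a' q)) by (exists a', q; auto).
    split; auto. }
  pose proof (cnt_lt l _ _ y (sub_mul_r a (Wp w)) Y1 Y2 Y3). lia.
Qed.

Lemma letter_sub : forall w Z, In Z w -> Sub Z (Wp w).
Proof.
  induction w as [|a w IH]; intros Z HZ; [destruct HZ|].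
  rewrite Wp_cons. destruct HZ as [<-|HZ]; [apply sub_mul_l|].
  intros y Hy. apply sub_mul_r, (IH Z HZ), Hy.
Qed.

Lemma exist_atomic (Hap : aperiodic H) X0 l (Hl : forall y, mem X0 y -> In y l) :
  forall n X, Sub X X0 -> cnt l X < n -> nonunit X ->
  exists w, factorization (@Pmul H) (Pone H) (atom (@Pmul H) (Pone H)) X w.
Proof.
  induction n; intros X SX Cn NX; [lia|].
  destruct (classic (atom (@Pmul H) (Pone H) X)) as [HA|HA].
  - exists [X]. split; [constructor; auto|]. change (Pmul X (Pone H) = X). apply Pone_r.
  - assert (exists A B, nonunit A /\ nonunit B /\ X = Pmul A B) as [A [B [NA [NB E]]]].
    { apply NNPP; intro C. apply HA. split; auto. intros A B NA NB E. apply C; eauto. }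
    assert (SA : Sub A X) by (rewrite E; apply sub_mul_l).
    assert (SB : Sub B X) by (rewrite E; apply sub_mul_r).
    assert (CA : cnt l A < cnt l X).
    { destruct (nonunit_elt _ NB) as [b [Hb Nb]].
      assert (exists y, In y l /\ mem X y /\ ~ mem A y) as [y [Y1 [Y2 Y3]]].
      { apply NNPP; intro C. apply (ap_right Hap A _ Nb). intros q Hq.
        assert (mem X (mm q b)) by (rewrite E; exists q, b; auto).
        apply NNPP; intro Nq. apply C. exists (mm q b). split; auto. }
      eapply cnt_lt; eauto. }
    assert (CB : cnt l B < cnt l X).
    { destruct (nonunit_elt _ NA) as [a [Ha Na]].
      assert (exists y, In y l /\ mem X y /\ ~ mem B y) as [y [Y1 [Y2 Y3]]].
      { apply NNPP; intro C. apply (ap_left Hap B _ Na). intros q Hq.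
        assert (mem X (mm a q)) by (rewrite E; exists a, q; auto).
        apply NNPP; intro Nq. apply C. exists (mm a q). split; auto. }
      eapply cnt_lt; eauto. }
    destruct (IHn A) as [wA [FA EA]]; auto; [intros y Hy; apply SX, SA, Hy| lia|].
    destruct (IHn B) as [wB [FB EB]]; auto; [intros y Hy; apply SX, SB, Hy| lia|].
    exists (wA ++ wB). split; [apply Forall_app; auto|].
    rewrite Wp_app, EA, EB. auto.
Qed.

Lemma exist_atomic' (Hap : aperiodic H) X : nonunit X ->
  exists w, factorization (@Pmul H) (Pone H) (atom (@Pmul H) (Pone H)) X w.
Proof.
  intros NX. destruct (proj1 (proj2_sig X)) as [l Hl].
  apply (exist_atomic Hap X l Hl (S (cnt l X))); auto.
  intros y Hy; auto.
Qed.

Lemma mkZ_fin (s : list H) : finite_set (fun y => In y s \/ y = one) /\ (fun y => In y s \/ y = one) one.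
Proof. split; [exists (one :: s); intros y [Hy| ->]; simpl; auto | right; auto]. Qed.

Definition mkZ (s : list H) : T := exist _ (fun y => In y s \/ y = one) (mkZ_fin s).

Lemma mkZ_in (X Z : T) l : (forall y, mem X y -> In y l) -> Sub Z X -> In Z (map mkZ (subs l)).
Proof.
  intros Hl S. apply in_map_iff. exists (filter (fun y => dec (mem Z y)) l).
  split; [|apply subs_filter].
  apply Pext; intro y; split.
  - intros [Hy| ->]; [|apply mem1]. apply filter_In in Hy. apply (decT _ (proj2 Hy)).
  - intros Hy. left. apply filter_In. split; [apply Hl, S, Hy| apply Tdec, Hy].
Qed.

Lemma wequiv_refl (w : list T) : wequiv (@Pmul H) w w.
Proof.
  assert (sub_perm_assoc (@Pmul H) w w).
  { exists w, w. split; [apply Permutation_refl|]. split.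
    - induction w; [apply sw_nil| apply sw_keep; auto].
    - induction w; constructor; auto.
      split; exists (Pone H), (Pone H); rewrite Pone_l, Pone_r; auto. }
  split; auto.
Qed.

Lemma ff_fin (Hap : aperiodic H) (P : T -> Prop) (HP : forall Z, P Z -> nonunit Z) X :
  exists L, Forall (factorization (@Pmul H) (Pone H) P X) L /\
    forall w, factorization (@Pmul H) (Pone H) P X w ->
      exists w', In w' L /\ wequiv (@Pmul H) w w'.
Proof.
  destruct (proj1 (proj2_sig X)) as [l Hl].
  exists (filter (fun w => dec (factorization (@Pmul H) (Pone H) P X w))
            (words (map mkZ (subs l)) (cnt l X))).
  split.
  - apply Forall_forall; intros w Hw; apply filter_In in Hw; destruct Hw as [_ Hw]; apply decT; auto.
  - intros w Fw. exists w. split; [|apply wequiv_refl].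
    apply filter_In. split; [|apply Tdec; auto].
    destruct Fw as [Fa E]. subst X.
    apply words_spec.
    + apply len_bound; auto. eapply Forall_impl; [exact HP| exact Fa].
    + intros Z HZ. eapply mkZ_in; [exact Hl|]. apply letter_sub; auto.
Qed.

Lemma ap_FF (Hap : aperiodic H) (P : T -> Prop) (HP : forall Z, P Z -> nonunit Z)
  (HA : forall Z, atom (@Pmul H) (Pone H) Z -> P Z) : FF_wrt (@Pmul H) (Pone H) P.
Proof.
  split.
  - intros X NX. destruct (exist_atomic' Hap X NX) as [w [F E]].
    exists w. split; auto. eapply Forall_impl; [exact HA|exact F].
  - intros X. apply ff_fin; auto.
Qed.

Fixpoint rep (w : list T) k := match k with 0 => w | S k => w ++ rep w k end.

Lemma BF_ap (P : T -> Prop) : BF_wrt (@Pmul H) (Pone H) P -> aperiodic H.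
Proof.
  intros [Ex Bd] x Nx. intro Fin.
  pose (Sx := exist (fun X : H -> Prop => finite_set X /\ X one)
               (fun y => exists n, y = @mpow H x n) (conj Fin (ex_intro _ 0 eq_refl)) : T).
  assert (SS : Pmul Sx Sx = Sx).
  { apply Pext; intro z; split.
    - intros [u [v [[a ->] [[b ->] ->]]]]. exists (a + b). apply (mpow_add x a b).
    - intros Hz. exists z, one. split; auto. split; [exists 0; auto|]. symmetry; apply mmulm1. }
  assert (xS : mem Sx x) by (exists 1; simpl; rewrite mmulm1; auto).
  assert (NS : nonunit Sx).
  { intros [a [b E]]. assert (mem (Pmul (Pmul a Sx) b) x) by (apply sub_mul_l, sub_mul_r, xS).
    rewrite <- E in H0. apply Nx, H0. }
  destruct (Ex Sx NS) as [w [F E]].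
  assert (Lw : 1 <= length w).
  { destruct w; simpl; [|lia]. exfalso. change (Pone H = Sx) in E.
    rewrite <- E in xS. apply Nx, xS. }
  assert (Rk : forall k, Wp (rep w k) = Sx /\ Forall P (rep w k) /\ Datatypes.S k <= length (rep w k)).
  { induction k as [|k [IH1 [IH2 IH3]]]; simpl; [auto|].
    rewrite Wp_app, E, IH1, SS, length_app. split; auto. split; [apply Forall_app; auto| lia]. }
  destruct (Bd Sx) as [N HN].
  destruct (Rk N) as [R1 [R2 R3]].
  assert (length (rep w N) <= N) by (apply HN; split; auto). lia.
Qed.

End P.

Theorem proposition2p7 (H : Monoid) :
  (aperiodic H <-> BF_atomic (@Pmul H) (Pone H)) /\
  (aperiodic H <-> BF (@Pmul H) (Pone H)) /\
  (aperiodic H <-> FF (@Pmul H) (Pone H)) /\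
  (aperiodic H <-> FF_atomic (@Pmul H) (Pone H)).
Proof.
  assert (HPa : forall Z : Pfin1 H, atom (@Pmul H) (Pone H) Z -> nonunit H Z) by (intros Z [A _]; exact A).
  assert (HPi : forall Z : Pfin1 H, irreducible (@Pmul H) (Pone H) Z -> nonunit H Z) by (intros Z [A _]; exact A).
  assert (HAi : forall Z : Pfin1 H, atom (@Pmul H) (Pone H) Z -> irreducible (@Pmul H) (Pone H) Z).
  { intros Z [A B]. split; auto. }
  unfold BF_atomic, BF, FF, FF_atomic.
  split; [|split; [|split]]; split; intros Hx.
  - apply FF_BF, ap_FF; auto.
  - eapply BF_ap; eauto.
  - apply FF_BF, ap_FF; auto.
  - eapply BF_ap; eauto.
  - apply ap_FF; auto.
  - eapply BF_ap, FF_BF; eauto.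
  - apply ap_FF; auto.
  - eapply BF_ap, FF_BF; eauto.
Qed.
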